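(* Let $(\mathcal{X},\kappa)$ be a finite similarity space with Gram matrix $\mathbf{K}$, and assume that the GAIT entropy $\mathbb{P}\mapsto\mathbb{H}^{\mathbf{K}}[\mathbb{P}]$ is concave on the probability simplex over $\mathcal{X}$. Let $\mathcal{Y}$ be a finite set and $(X,Y)$ a random pair with values in $\mathcal{X}\times\mathcal{Y}$. Then $$\mathbb{H}^{\mathbf{K},\mathbf{I}}[X\mid Y]\le\mathbb{H}^{\mathbf{K}}[X].$$
   Context: A finite similarity space $(\mathcal{X},\kappa)$ is a finite set with a symmetric $\kappa:\mathcal{X}\times\mathcal{X}\to[0,1]$ with $\kappa(x,x)=1$; its Gram matrix is $\mathbf{K}_{x,y}=\kappa(x,y)$. For a distribution $\mathbb{P}$ on $\mathcal{X}$, $(\mathbf{K}\mathbb{P})(x)=\sum_y\kappa(x,y)\mathbb{P}(y)$ and the GAIT entropy is $\mathbb{H}^{\mathbf{K}}[\mathbb{P}]=-\sum_x\mathbb{P}(x)\log(\mathbf{K}\mathbb{P})(x)$ (with $0\log0=0$); $\mathbb{H}^{\mathbf{K}}[X]$ is the GAIT entropy of the law of $X$. $\mathbf{I}$ denotes the identity kernel on $\mathcal{Y}$ ($1$ on the diagonal, $0$ elsewhere). For kernels $\kappa$, $\lambda$ with Gram matrices $\mathbf{K},\mathbf{\Lambda}$, $\mathbb{H}^{\mathbf{K}\otimes\mathbf{\Lambda}}[X,Y]$ is the GAIT entropy of the joint law of $(X,Y)$ with respect to the product kernel $\kappa(x,x')\lambda(y,y')$, and $\mathbb{H}^{\mathbf{K},\mathbf{\Lambda}}[X\mid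 Y]=\mathbb{H}^{\mathbf{K}\otimes\mathbf{\Lambda}}[X,Y]-\mathbb{H}^{\mathbf{\Lambda}}[Y]$. *)

(* Defs.v *)
From mathcomp Require Import all_boot all_order all_algebra.
From mathcomp Require Import all_classical all_reals all_analysis.
Set Implicit Arguments. Unset Strict Implicit. Unset Printing Implicit Defensive.
Import Order.TTheory GRing.Theory Num.Theory.
Local Open Scope ring_scope.

Definition similarity {R : realType} {T : finType} (k : T -> T -> R) : Prop :=
  (forall x y, k x y = k y x) /\ (forall x y, 0 <= k x y <= 1) /\ (forall x, k x x = 1).

Definition is_distr {R : realType} {T : finType} (P : T -> R) : Prop :=
  (forall x, 0 <= P x) /\ \sum_x P x = 1.

Definition Kmul {R : realType} {T : finType} (k : T -> T -> R) (P : T -> R) (x : T) : R :=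
  \sum_y k x y * P y.

(* GAIT entropy, with the convention 0 log 0 = 0 (terms with P x = 0 are dropped). *)
Definition gait {R : realType} {T : finType} (k : T -> T -> R) (P : T -> R) : R :=
  - \sum_(x | P x != 0) P x * ln (Kmul k P x).

Definition idker {R : realType} {T : finType} (y y' : T) : R := (y == y')%:R.

Definition prodker {R : realType} {X Y : finType} (k : X -> X -> R) (l : Y -> Y -> R)
  (p q : X * Y) : R := k p.1 q.1 * l p.2 q.2.

Definition marg1 {R : realType} {X Y : finType} (P : X * Y -> R) (x : X) : R :=
  \sum_y P (x, y).
Definition marg2 {R : realType} {X Y : finType} (P : X * Y -> R) (y : Y) : R :=
  \sum_x P (x, y).

Definition cond_gait {R : realType} {X Y : finType} (k : X -> X -> R) (l : Y -> Y -> R)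
  (P : X * Y -> R) : R :=
  gait (prodker k l) P - gait l (marg2 P).

Definition gait_concave {R : realType} {T : finType} (k : T -> T -> R) : Prop :=
  forall (P Q : T -> R) (t : R), is_distr P -> is_distr Q -> 0 <= t <= 1 ->
    t * gait k P + (1 - t) * gait k Q <= gait k (fun x => t * P x + (1 - t) * Q x).

(* Main.v *)
Require Import Defs.
From mathcomp Require Import all_boot all_order all_algebra.
From mathcomp Require Import all_classical all_reals all_analysis.
From mathcomp Require Import ring lra.
Import Order.TTheory GRing.Theory Num.Theory.
Local Open Scope ring_scope.

Lemma jensen_gait (R : realType) (X Y : finType) (k : X -> X -> R)
  (hconc : gait_concave k) (w : Y -> R) (Q : Y -> X -> R)
  (hw : forall y, 0 <= w y) (hQ : forall y, is_distr (Q y)) (s : seq Y) :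
  \sum_(y <- s) w y * gait k (Q y) <=
  (\sum_(y <- s) w y) * gait k (fun x => (\sum_(y <- s) w y * Q y x) / \sum_(y <- s) w y).
Proof.
elim: s => [|y s IH]; first by rewrite !big_nil mul0r.
rewrite !big_cons.
set Ws := \sum_(j <- s) w j in IH *.
set M := fun x => \sum_(j <- s) w j * Q j x.
have -> : (fun x => (\sum_(j <- y :: s) w j * Q j x) / (w y + Ws))
   = (fun x => (w y * Q y x + M x) / (w y + Ws)) by apply: funext => x; rewrite big_cons.
have Ws0 : 0 <= Ws by apply: sumr_ge0.
have hM : forall x, 0 <= M x.
  by move=> x; apply: sumr_ge0 => j _; apply: mulr_ge0 => //; case: (hQ j) => h _; apply: h.
have sumM : \sum_x M x = Ws.
  rewrite /M exchange_big /=; apply: eq_bigr => j _.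
  by rewrite -mulr_sumr; case: (hQ j) => _ ->; rewrite mulr1.
have IH' : \sum_(j <- s) w j * gait k (Q j) <= Ws * gait k (fun x => M x / Ws) by [].
have [Wse0|WsN0] := eqVneq Ws 0.
  have M0 : forall x, M x = 0.
    move=> x; apply: (psumr_eq0P (P := predT) (fun x _ => hM x)) => //.
    by rewrite sumM.
  rewrite Wse0 mul0r in IH'; rewrite Wse0 addr0.
  have [wy0|wyN0] := eqVneq (w y) 0.
    by rewrite wy0 mul0r add0r mul0r.
  have -> : (fun x => (w y * Q y x + M x) / w y) = Q y.
    by apply: funext => x; rewrite M0 addr0 mulrC mulKf.
  by rewrite gerDl.
have Wsp : 0 < Ws by rewrite lt0r WsN0.
have Wp : 0 < w y + Ws by apply: ltr_wpDl.
have WN0 : w y + Ws != 0 by rewrite gt_eqF.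
set t := w y / (w y + Ws).
have t01 : 0 <= t <= 1.
  apply/andP; split; first by apply: divr_ge0 => //; apply: ltW.
  by rewrite ler_pdivrMr // mul1r lerDl.
have hd : is_distr (fun x => M x / Ws).
  split; first by move=> x; apply: divr_ge0.
  by rewrite -mulr_suml sumM divff.
have := hconc (Q y) (fun x => M x / Ws) t (hQ y) hd t01.
have -> : (fun x => t * Q y x + (1 - t) * (M x / Ws)) = (fun x => (w y * Q y x + M x) / (w y + Ws)).
  apply: funext => x; rewrite /t; field.
  by rewrite WsN0 WN0.
move=> hc.
have e : (w y + Ws) * (t * gait k (Q y) + (1 - t) * gait k (fun x => M x / Ws))
   = w y * gait k (Q y) + Ws * gait k (fun x => M x / Ws).
  rewrite /t; field; done.
apply: (le_trans (y := w y * gait k (Q y) + Ws * gait k (fun x => M x / Ws))).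
  by rewrite lerD2l.
by rewrite -e; apply: ler_wpM2l => //; apply: ltW.
Qed.
Lemma gaitE (R : realType) (T : finType) (k : T -> T -> R) (P : T -> R) :
  gait k P = - \sum_x P x * ln (Kmul k P x).
Proof.
rewrite /gait big_mkcond /=; congr (- _); apply: eq_bigr => x _.
by case: eqP => // ->; rewrite mul0r.
Qed.

Lemma sum_pairE (R : realType) (X Y : finType) (F : X * Y -> R) :
  \sum_z F z = \sum_y \sum_x F (x, y).
Proof.
rewrite exchange_big pair_big /=; apply: eq_bigr => -[x y] _ //.
Qed.

Theorem theorem5 (R : realType) (X Y : finType) (k : X -> X -> R)
  (hk : similarity k) (hconc : gait_concave k)
  (PXY : X * Y -> R) (hP : is_distr PXY) :
  cond_gait k (@idker R Y) PXY <= gait k (marg1 PXY).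
Proof.
case: hP => hP0 hP1.
case: hk => _ [hk01 hk1].
set p := marg2 PXY.
have p0 : forall y, 0 <= p y by move=> y; apply: sumr_ge0.
have psum : \sum_y p y = 1 by rewrite -hP1 sum_pairE.
have pz : forall x y, p y = 0 -> PXY (x, y) = 0.
  move=> x y py; apply: (psumr_eq0P (P := predT) (F := fun x => PXY (x, y))) => //.
have x0 : X.
  case: (pickP (@predT X)) => [x _|h]; first exact: x.
  exfalso; move: hP1; rewrite big1 => [|z _]; last by have := h z.1.
  by move/eqP; rewrite eq_sym oner_eq0.
set Q := fun y x => if p y == 0 then (x == x0)%:R else PXY (x, y) / p y.
have hQ : forall y, is_distr (Q y).
  move=> y; rewrite /Q; case: eqP => py; split.
  - by move=> x; rewrite ler0n.
  - by rewrite (bigD1 x0) //= eqxx big1 ?addr0 // => x /negbTE ->.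
  - by move=> x; apply: divr_ge0.
  - by rewrite -mulr_suml divff //; apply/eqP.
have pQ : forall x y, p y * Q y x = PXY (x, y).
  move=> x y; rewrite /Q; case: eqP => py; first by rewrite py mul0r pz.
  by rewrite mulrC divfK //; apply/eqP.
have J := @jensen_gait R X Y k hconc p Q p0 hQ (index_enum Y).
have -> : gait k (marg1 PXY) = (\sum_y p y) *
    gait k (fun x => (\sum_y p y * Q y x) / \sum_y p y).
  rewrite psum mul1r; congr (gait k _); apply: funext => x.
  by rewrite divr1 /marg1; apply: eq_bigr => y _; rewrite pQ.
apply: le_trans J; rewrite le_eqVlt; apply/orP; left; apply/eqP.
rewrite /cond_gait !gaitE.
have Kid : forall y, Kmul idker p y = p y.
  move=> y; rewrite /Kmul (bigD1 y) //= /idker eqxx mul1r big1 ?addr0 // => y'.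
  by rewrite eq_sym => /negbTE ->; rewrite mul0r.
have Kprod : forall x y, Kmul (prodker k idker) PXY (x, y) = \sum_x' k x x' * PXY (x', y).
  move=> x y; rewrite /Kmul sum_pairE exchange_big; apply: eq_bigr => x' _ /=.
  rewrite (bigD1 y) //= /prodker /idker /= eqxx mulr1 big1 ?addr0 // => y'.
  by rewrite eq_sym => /negbTE ->; rewrite mulr0 mul0r.
have KQ : forall x y, p y != 0 -> Kmul k (Q y) x = (\sum_x' k x x' * PXY (x', y)) / p y.
  move=> x y pn; rewrite /Kmul /Q (negbTE pn) mulr_suml; apply: eq_bigr => x' _.
  by rewrite mulrA.
have term : forall x y, PXY (x, y) * ln (Kmul (prodker k idker) PXY (x, y)) =
    PXY (x, y) * ln (p y) + PXY (x, y) * ln (Kmul k (Q y) x).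
  move=> x y.
  have [->|Pn0] := eqVneq (PXY (x, y)) 0; first by rewrite !mul0r addr0.
  have Pp : 0 < PXY (x, y) by rewrite lt0r Pn0 hP0.
  have pp : 0 < p y.
    apply: (lt_le_trans Pp); rewrite /p /marg2 (bigD1 x) //= lerDl.
    by apply: sumr_ge0 => x' _; apply: hP0.
  have Ap : 0 < \sum_x' k x x' * PXY (x', y).
    apply: (lt_le_trans Pp); rewrite (bigD1 x) //= hk1 mul1r lerDl.
    by apply: sumr_ge0 => x' _; apply: mulr_ge0; [case/andP: (hk01 x x')|apply: hP0].
  rewrite Kprod KQ ?gt_eqF //.
  set A := \sum_x' k x x' * PXY (x', y) in Ap *.
  have eA : ln A = ln (p y) + ln (A / p y).
    by rewrite -lnM ?posrE ?divr_gt0 // mulrC divfK // gt_eqF.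
  by rewrite eA mulrDr.
rewrite sum_pairE.
under eq_bigr => y _ do under eq_bigr => x _ do rewrite term.
under eq_bigr => y _ do rewrite big_split /= -mulr_suml.
under [X in _ = X]eq_bigr => y _ do rewrite gaitE mulrN mulr_sumr.
under [X in _ = X]eq_bigr => y _ do under eq_bigr => x _ do rewrite mulrA pQ.
under [in X in _ - X]eq_bigr => y _ do rewrite Kid.
rewrite big_split /= sumrN.
rewrite /p /marg2; ring.
Qed.
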